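(* Let $X,Y$ be non-commuting indeterminates and $C=XYX^{-1}Y^{-1}$. Let $(R_n)_{n\in\mathbb Z}$ satisfy $$R_{2n}CR_{2n-2}=1+R_{2n-1},\qquad R_{2n+1}CR_{2n-1}=1+R_{2n}^4\qquad(n\in\mathbb Z),$$ with $R_1=YXY^{-1}$ and $R_2=Y$, and set $u_n=R_{2n}$, so that $u_1=Y$. Define $$y_1'=\big(Y^3+(1+X)Y^{-1}\big)X^{-1}Y^{-1},$$ $$y_2'=\big(Y+(1+X)Y^{-2}(1+X)Y^{-1}\big)X^{-1}Y^{-1},$$ $$y_3'=(1+X)Y^{-2}.$$ Then, as formal power series in a central variable $t$, $$\sum_{n\ge0}t^nu_{n+1}=\Big(1-ty_1'-t^2(1-ty_3')^{-1}y_2'\Big)^{-1}u_1.$$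
   Context: Work in the free skew field (non-commutative rational functions) over $\mathbb C$ generated by $X,Y$. The variable $t$ is a formal variable commuting with everything, and inverses of $1-(\text{terms of positive }t\text{-degree})$ are expanded as geometric series. *)

(* Defs.v *)
From HB Require Import structures.
From mathcomp Require Import all_boot all_order all_algebra.
From mathcomp Require Import complex.
From mathcomp Require Import Rstruct.
Set Implicit Arguments. Unset Strict Implicit. Unset Printing Implicit Defensive.
Import Order.TTheory GRing.Theory Num.Theory.
Local Open Scope ring_scope.

Definition Cplx : comUnitRingType := (Rdefinitions.R)[i].

Definition is_division_ring (K : unitRingType) : Prop :=
  forall x : K, x != 0 -> x \is a GRing.unit.

Definition generated_by (K : unitAlgType Cplx) (X Y : K) : Prop :=
  forall T : pred K,
    (forall c : Cplx, c%:A \in T) -> X \in T -> Y \in T ->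
    (forall x y, x \in T -> y \in T -> x + y \in T) ->
    (forall x, x \in T -> - x \in T) ->
    (forall x y, x \in T -> y \in T -> x * y \in T) ->
    (forall x, x \in T -> x^-1 \in T) ->
    forall x, x \in T.

(* A specialization K ~> L over C<X,Y> sending X |-> a, Y |-> b (Cohn):
   a local subring S of K containing C, X, Y and a ring homomorphism
   phi : S -> L over C with phi X = a, phi Y = b, whose kernel is the
   maximal ideal of S (elements of S not killed by phi are invertible in S). *)
Definition specialization (K L : unitAlgType Cplx) (X Y : K) (a b : L) : Prop :=
  exists (S : pred K) (phi : K -> L),
    (forall c : Cplx, c%:A \in S) /\ X \in S /\ Y \in S /\
    (forall x y, x \in S -> y \in S -> [/\ x + y \in S, - x \in S & x * y \in S]) /\
    (forall c : Cplx, phi (c%:A) = c%:A) /\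
    (forall x y, x \in S -> y \in S ->
        phi (x + y) = phi x + phi y /\ phi (x * y) = phi x * phi y) /\
    phi X = a /\ phi Y = b /\
    (forall x, x \in S -> phi x != 0 -> x^-1 \in S).

(* K, with the elements X and Y, is the free skew field (the universal field
   of fractions of the free algebra C<X,Y>, Cohn): K is a division C-algebra
   generated by X, Y, which specializes to every division C-algebra L at every
   pair (a, b) of elements of L. *)
Definition is_free_skew_field (K : unitAlgType Cplx) (X Y : K) : Prop :=
  [/\ is_division_ring K, generated_by X Y &
      forall (L : unitAlgType Cplx), is_division_ring L ->
        forall a b : L, specialization X Y a b].

Definition pser (K : ringType) := nat -> K.
Definition ps_const (K : ringType) (c : K) : pser K :=
  fun n => if n == 0%N then c else 0.
Definition ps_t (K : ringType) : pser K := fun n => if n == 1%N then 1 else 0.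
Definition ps_add (K : ringType) (f g : pser K) : pser K := fun n => f n + g n.
Definition ps_opp (K : ringType) (f : pser K) : pser K := fun n => - f n.
Definition ps_mul (K : ringType) (f g : pser K) : pser K :=
  fun n => \sum_(i < n.+1) f i * g (n - i)%N.
Fixpoint ps_pow (K : ringType) (f : pser K) (m : nat) : pser K :=
  match m with
  | 0%N => ps_const 1
  | m'.+1 => ps_mul f (ps_pow f m')
  end.
(* (1 - a)^{-1} for a of positive t-order, expanded as the geometric series
   sum_m a^m (the coefficient of t^n only involves m <= n). *)
Definition ps_geom (K : ringType) (a : pser K) : pser K :=
  fun n => \sum_(m < n.+1) ps_pow a m n.

Section Data.
Variable K : unitRingType.
Variables X Y : K.
Definition commC : K := X * Y * X^-1 * Y^-1.
Definition y1' : K := (Y ^+ 3 + (1 + X) * Y^-1) * X^-1 * Y^-1.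
Definition y2' : K := (Y + (1 + X) * Y^-2 * (1 + X) * Y^-1) * X^-1 * Y^-1.
Definition y3' : K := (1 + X) * Y^-2.
End Data.

(* Main.v *)
Require Import Defs.
From HB Require Import structures.
From mathcomp Require Import all_boot all_order all_algebra.
From mathcomp Require Import complex Rstruct zify.
From Stdlib Require Import FunctionalExtensionality.
Import GRing.Theory Num.Theory.
Local Open Scope ring_scope.
Set Implicit Arguments. Unset Strict Implicit.

Lemma ac_pull_lem (V : zmodType) (R1 R2 d e : V) : R1 = R2 + d -> R1 + e = (R2 + e) + d.
Proof. by move->; rewrite addrAC. Qed.
Lemma ac_pull0 (V : zmodType) (d : V) : d = 0 + d.
Proof. by rewrite add0r. Qed.
Lemma ac_step (V : zmodType) (L R R2 d : V) : R = R2 + d -> L = R2 -> L + d = R.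
Proof. by move=> -> ->. Qed.
Lemma ac_base (V : zmodType) (d R : V) : R = 0 + d -> d = R.
Proof. by move=> ->; rewrite add0r. Qed.

Ltac ac_pull d R :=
  lazymatch R with
  | (?R1 + d) => constr:(@erefl _ R)
  | d => constr:(ac_pull0 d)
  | (?R1 + ?e) => let p := ac_pull d R1 in constr:(ac_pull_lem e p)
  end.

Ltac acsolve :=
  lazymatch goal with
  | |- ?L + ?d = ?R => let p := ac_pull d R in apply: (ac_step p); acsolve
  | |- ?d = ?R => let p := ac_pull d R in apply: (ac_base p)
  end.

Ltac nexp := rewrite ?exprS ?expr0; 
  repeat (rewrite ?mulrDl ?mulrDr ?mul1r ?mulr1); rewrite ?mulrA ?addrA.


Lemma myinv (K : unitRingType) (a b : K) : a \is a GRing.unit -> a * b = 1 -> a^-1 = b.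
Proof. by move=> ua hab; rewrite -[b](mulKr ua) hab mulr1. Qed.

Lemma umul (K : unitRingType) (a b : K) : a \is a GRing.unit -> b \is a GRing.unit -> a * b \is a GRing.unit.
Proof. by move=> ua ub; rewrite unitrMl. Qed.
Ltac uprod := repeat apply: umul; rewrite ?unitrV //.

Definition Pf (K : unitRingType) (x y : K) :=
  y^+3 * x^-1 * y^-1 + (1 + x) * y^-1 * x^-1 * (1 + x) * y^-1.

Section Win.
Variable K : unitRingType.
Variables x y W Z : K.
Hypotheses (ux : x \is a GRing.unit) (uy : y \is a GRing.unit)
  (uW : W \is a GRing.unit) (uZ : Z \is a GRing.unit).
Hypothesis hW : W = 1 + y^+4.
Hypothesis hZ : Z = x + W.

Ltac canc := rewrite ?(mulrK ux, mulrK uy, mulrK uW, mulrK uZ, divrK ux, divrK uy, divrK uW, divrK uZ,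
   mulrV ux, mulrV uy, mulrV uW, mulrV uZ, mulVr ux, mulVr uy, mulVr uW, mulVr uZ, mul1r, mulr1).

Lemma K1 a : a * Z * x^-1 * W = a * W * x^-1 * Z.
Proof. rewrite -!(mulrA a); congr (a * _); rewrite hZ; nexp; canc; acsolve. Qed.
Lemma K2 a : a * Z * W^-1 * x = a * x * W^-1 * Z.
Proof. rewrite -!(mulrA a); congr (a * _); rewrite hZ; nexp; canc; acsolve. Qed.
Lemma K1h : Z * x^-1 * W = W * x^-1 * Z.
Proof. by have := K1 1; rewrite !mul1r. Qed.
Lemma K2h : Z * W^-1 * x = x * W^-1 * Z.
Proof. by have := K2 1; rewrite !mul1r. Qed.
Lemma hyiW a : a * y^-1 * W = a * W * y^-1.
Proof.
rewrite -!(mulrA a); congr (a * _).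
have hy : y * W = W * y by rewrite hW; nexp; acsolve.
apply: (mulrI uy); rewrite !mulrA; canc; rewrite hy -mulrA; canc; done.
Qed.

Definition xp := x * y * x^-1 * W * y^-1 * x^-1.
Definition yp := Z * y^-1 * x^-1.

Lemma ypV : yp^-1 = x * y * Z^-1.
Proof. apply: myinv; first by rewrite /yp; uprod.
rewrite /yp !mulrA; canc; done. Qed.
Lemma xpV : xp^-1 = x * y * W^-1 * x * y^-1 * x^-1.
Proof. apply: myinv; first by rewrite /xp; uprod.
rewrite /xp !mulrA; canc; done. Qed.
Lemma uxp : xp \is a GRing.unit.
Proof. by rewrite /xp; uprod. Qed.
Lemma uyp : yp \is a GRing.unit.
Proof. by rewrite /yp; uprod. Qed.

Lemma win_b : yp * xp * yp^-1 = W * x^-1.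
Proof. rewrite ypV /xp /yp !mulrA; canc. rewrite K1h; canc; done. Qed.

Lemma win_a : commC xp yp = commC x y.
Proof. rewrite /commC xpV ypV /xp /yp !mulrA; canc. rewrite K2; canc.
rewrite -hyiW; canc; done. Qed.

Lemma xp1 : 1 + xp = x * y * x^-1 * Z * y^-1 * x^-1.
Proof. rewrite /xp hZ; nexp; canc; acsolve. Qed.

Lemma win_c : Pf xp yp = Pf x y.
Proof.
have uWy : W * y \is a GRing.unit by uprod.
apply: (mulIr uWy).
have -> : Pf xp yp = Z * y^-1 * x^-1 * Z * y^-1 * W^-1 + x * y * y * W^-1.
  rewrite /Pf xp1 xpV ypV /yp; nexp; canc. rewrite K2; canc. done.
nexp; canc.
rewrite /Pf hZ hW; nexp; canc; acsolve.
Qed.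
End Win.

Section Misc.
Variable K : unitRingType.
Variables x y : K.
Hypotheses (ux : x \is a GRing.unit) (uy : y \is a GRing.unit).
Ltac canc := rewrite ?(mulrK ux, mulrK uy, divrK ux, divrK uy,
   mulrV ux, mulrV uy, mulVr ux, mulVr uy, mul1r, mulr1).

Lemma L1' r3 : r3 * commC x y * (y * x * y^-1) = 1 + y^+4 -> r3 = (1 + y^+4) * x^-1.
Proof. move=> h; rewrite -h /commC !mulrA; canc; done. Qed.
Lemma L2' r4 : r4 * commC x y * y = 1 + (1 + y^+4) * x^-1 -> r4 = (x + (1 + y^+4)) * y^-1 * x^-1.
Proof. move=> h.
have : r4 * (x * y * x^-1) = 1 + (1 + y^+4) * x^-1 by rewrite -h /commC !mulrA; canc.
move=> h2.
have e : r4 = r4 * (x * y * x^-1) * (x * y^-1 * x^-1) by rewrite !mulrA; canc.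
rewrite e h2; nexp; canc; acsolve. Qed.
Lemma L0' r0 : y * commC x y * r0 = 1 + y * x * y^-1 -> commC x y * r0 = y^-1 + x * y^-1.
Proof. move=> h; apply: (mulrI uy); rewrite mulrA h; nexp; canc; acsolve. Qed.
Lemma Llin : (x + (1 + y^+4)) * y^-1 * x^-1 = Pf x y * y - (y^-1 + x * y^-1).
Proof. apply/eqP; rewrite eq_sym subr_eq; apply/eqP. rewrite /Pf; nexp; canc; acsolve. Qed.
Lemma Ly13 : y1' x y + y3' x y = Pf x y.
Proof. rewrite /y1' /y3' /Pf -!exprVn; nexp; canc; acsolve. Qed.
Lemma Ly2 : y2' x y + commC x y = y3' x y * y1' x y.
Proof. rewrite /y1' /y2' /y3' /commC -!exprVn; nexp; canc; acsolve. Qed.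
Lemma Ly1 : y1' x y * y = (x + (1 + y^+4)) * y^-1 * x^-1.
Proof. rewrite /y1'; nexp; canc; acsolve. Qed.
End Misc.

Section Ser.
Variable K : ringType.

Lemma psmc (f : pser K) c n : ps_mul f (ps_const c) n = f n * c.
Proof.
rewrite /ps_mul big_ord_recr /= subnn /ps_const eqxx big1 ?add0r // => i _.
rewrite (_ : (n - i == 0)%N = false) ?mulr0 //.
by apply/negbTE; rewrite subn_eq0 -ltnNge.
Qed.

Lemma psind (F g : pser K) k c n : (forall i, F i = if i == k then c else 0) ->
  ps_mul F g n = if (k <= n)%N then c * g (n - k)%N else 0.
Proof.
move=> hF; rewrite /ps_mul.
case: (leqP k n) => hk.
  have hk' : (k < n.+1)%N by [].
  rewrite (bigD1 (Ordinal hk')) //= hF eqxx big1 ?addr0 // => i hi.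
  rewrite hF; case: (eqVneq (nat_of_ord i) k) => [e|_]; last by rewrite mul0r.
  by move: hi; rewrite (_ : i = Ordinal hk') ?eqxx //; apply: val_inj.
rewrite big1 // => i _; rewrite hF.
have : (nat_of_ord i != k) by rewrite neq_ltn (leq_trans (ltn_ord i) hk).
by move/negbTE->; rewrite mul0r.
Qed.

Lemma tmul (g : pser K) n : ps_mul (ps_t K) g n = if (1 <= n)%N then g (n - 1)%N else 0.
Proof. by rewrite (@psind _ _ 1 1) // mul1r. Qed.

Lemma ttE n : ps_mul (ps_t K) (ps_t K) n = if n == 2%N then 1 else 0.
Proof. rewrite tmul /ps_t; case: n => [|[|[|n]]] //. Qed.

Lemma tt2 (g : pser K) n : ps_mul (ps_mul (ps_t K) (ps_t K)) g n =
   if (2 <= n)%N then g (n - 2)%N else 0.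
Proof. by rewrite (@psind _ _ 2 1) ?mul1r // => i; rewrite ttE. Qed.

Lemma tcE c i : ps_mul (ps_t K) (ps_const c) i = if i == 1%N then c else 0.
Proof. by rewrite psmc /ps_t; case: eqP; rewrite ?mul1r ?mul0r. Qed.

Lemma powtc c m n : ps_pow (ps_mul (ps_t K) (ps_const c)) m n = if n == m then c ^+ m else 0.
Proof.
elim: m n => [|m IH] n /=.
  by rewrite /ps_const expr0.
rewrite (@psind _ _ 1 c) => [|i]; last by rewrite tcE.
case: n => [|n] //=; rewrite subn1 /= IH eqSS; case: eqP => _; by rewrite ?exprS ?mulr0.
Qed.

Lemma geomtc c n : ps_geom (ps_mul (ps_t K) (ps_const c)) n = c ^+ n.
Proof.
rewrite /ps_geom big_ord_recr /= powtc eqxx big1 ?add0r // => i _.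
by rewrite powtc (_ : (n == i) = false) //; apply/negbTE; rewrite neq_ltn ltn_ord orbT.
Qed.

Lemma AE y1 y2 y3 n :
  ps_add (ps_mul (ps_t K) (ps_const y1))
         (ps_mul (ps_mul (ps_mul (ps_t K) (ps_t K))
                         (ps_geom (ps_mul (ps_t K) (ps_const y3))))
                 (ps_const y2)) n
  = (if n == 1%N then y1 else 0) + (if (2 <= n)%N then y3 ^+ (n - 2) * y2 else 0).
Proof.
rewrite /ps_add tcE psmc tt2; case: (leqP 2 n) => _; by rewrite ?geomtc ?mul0r.
Qed.

Section G.
Variable A : pser K.
Hypothesis A0 : A 0%N = 0.

Lemma powA0 m n : (n < m)%N -> ps_pow A m n = 0.
Proof.
elim: m n => [|m IH] n //= hn.
rewrite /ps_mul big1 // => i _.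
case: (posnP i) => [->|hi]; first by rewrite A0 mul0r.
move: (ltn_ord i) => hi2; by rewrite IH ?mulr0 //; lia.
Qed.

Lemma geomE N n : (n < N)%N -> ps_geom A n = \sum_(m < N) ps_pow A m n.
Proof.
elim: N => [|N IH] //.
rewrite ltnS leq_eqVlt => /orP [/eqP ->|lt] //.
by rewrite big_ord_recr /= -IH // powA0 // addr0.
Qed.

Lemma Grec n : ps_geom A n = (if n == 0%N then 1 else 0) + \sum_(i < n.+1) A i * ps_geom A (n - i)%N.
Proof.
case: n => [|k].
  by rewrite /ps_geom !big_ord1 /= A0 mul0r addr0.
rewrite add0r {1}/ps_geom big_ord_recl.
rewrite (_ : ps_pow A ord0 k.+1 = 0) ?add0r //.
rewrite (eq_bigr (fun m : 'I_k.+1 => \sum_(i < k.+2) A i * ps_pow A m (k.+1 - i)%N)); last first.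
  by move=> m _.
rewrite exchange_big /=; apply: eq_bigr => i _.
rewrite -mulr_sumr.
case: (posnP i) => [->|hi]; first by rewrite A0 !mul0r.
by rewrite (@geomE k.+1) //; lia.
Qed.
End G.

Lemma uniq_rec (A : pser K) (c : K) (f g : nat -> K) : A 0%N = 0 ->
  (forall n, f n = (if n == 0%N then c else 0) + \sum_(i < n.+1) A i * f (n - i)%N) ->
  (forall n, g n = (if n == 0%N then c else 0) + \sum_(i < n.+1) A i * g (n - i)%N) ->
  forall n, f n = g n.
Proof.
move=> A0 hf hg; elim/ltn_ind => n IH.
rewrite hf hg; congr (_ + _); apply: eq_bigr => i _.
case: (posnP i) => [->|hi]; first by rewrite A0 !mul0r.
move: (ltn_ord i) => hi2; by rewrite IH //; lia.
Qed.

Definition Bsum (y2 y3 : K) (f : nat -> K) n := \sum_(i < n) y3 ^+ i * y2 * f (n - i.+1)%N.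

Lemma BsumS y2 y3 f n : Bsum y2 y3 f n.+1 = y2 * f n + y3 * Bsum y2 y3 f n.
Proof.
rewrite /Bsum big_ord_recl /= expr0 mul1r subn1 /=; congr (_ + _).
rewrite mulr_sumr; apply: eq_bigr => i _.
by rewrite /bump /= add1n subSS exprS !mulrA.
Qed.

Lemma Tsum y1 y2 y3 (f : nat -> K) n :
  \sum_(i < n.+2) ((if nat_of_ord i == 1%N then y1 else 0) + (if (2 <= i)%N then y3 ^+ (i - 2) * y2 else 0)) * f (n.+1 - i)%N
  = y1 * f n + Bsum y2 y3 f n.
Proof.
rewrite big_ord_recl /= addr0 mul0r add0r big_ord_recl /= addr0 /bump /= subn1 /=; congr (_ + _).
apply: eq_bigr => i _; by rewrite add0r !add1n subn2 /= subSS.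
 
Qed.
End Ser.

Definition CC := (Rdefinitions.R)[i].
Lemma divC : is_division_ring (Cplx^o).
Proof. move=> x hx. change (x \is a @GRing.unit CC). by rewrite unitfE. Qed.
Lemma posM (a b : Cplx^o) : (0 : CC) < a -> (0:CC) < b -> (0:CC) < a * b.
Proof. move=> ha hb. exact: (mulr_gt0 ha hb). Qed.
Lemma posD (a b : Cplx^o) : (0 : CC) < a -> (0:CC) < b -> (0:CC) < a + b.
Proof. move=> ha hb. exact: (addr_gt0 ha hb). Qed.
Lemma posV (a : Cplx^o) : (0 : CC) < a -> (0:CC) < a^-1.
Proof. move=> ha. change ((0:CC) < (a : CC)^-1). by rewrite invr_gt0. Qed.
Lemma pos1 : (0 : CC) < (1 : Cplx^o).
Proof. exact: ltr01. Qed.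
Lemma posne0 (a : Cplx^o) : (0 : CC) < a -> a != 0.
Proof. move=> ha. exact: (lt0r_neq0 ha). Qed.

Lemma solveL (K : unitRingType) (a C b c : K) : C \is a GRing.unit -> b \is a GRing.unit ->
  a * C * b = c -> a = c * b^-1 * C^-1.
Proof. by move=> uC ub <-; rewrite mulrK // mulrK. Qed.

Lemma idx1 (n : nat) : 2 * (n.+1)%:Z = Posz (2*n+2). Proof. lia. Qed.
Lemma idx2 (n : nat) : Posz (2*n+2) - 2 = Posz (2*n). Proof. lia. Qed.
Lemma idx3 (n : nat) : Posz (2*n+2) - 1 = Posz (2*n+1). Proof. lia. Qed.
Lemma idx4 (n : nat) : Posz (2*n+2) + 1 = Posz (2*n+3). Proof. lia. Qed.
Lemma idx5 (n : nat) : (2 * n.+1 + 2 = 2*n+4)%N. Proof. lia. Qed.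
Lemma idx6 (n : nat) : (2 * n.+1 + 1 = 2*n+3)%N. Proof. lia. Qed.
Lemma idx7 (n : nat) : (2 * n.+1 = 2*n+2)%N. Proof. lia. Qed.
Lemma idx8 (n : nat) : 2 * n%:Z = Posz (2*n). Proof. lia. Qed.
Lemma idx9 (n : nat) : (2 * n.+2 = 2*n+4)%N. Proof. lia. Qed.

Theorem theorem4p9 (K : unitAlgType Cplx) (X Y : K) (R : int -> K) :
  is_free_skew_field X Y ->
  (forall n : int, R (2 * n) * commC X Y * R (2 * n - 2) = 1 + R (2 * n - 1)) ->
  (forall n : int, R (2 * n + 1) * commC X Y * R (2 * n - 1) = 1 + R (2 * n) ^+ 4) ->
  R 1 = Y * X * Y^-1 ->
  R 2 = Y ->
  let u := fun n : nat => R (2 * n%:Z) in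
  let A : pser K :=
    ps_add (ps_mul (ps_t K) (ps_const (y1' X Y)))
           (ps_mul (ps_mul (ps_mul (ps_t K) (ps_t K))
                           (ps_geom (ps_mul (ps_t K) (ps_const (y3' X Y)))))
                   (ps_const (y2' X Y))) in
  (fun n : nat => u n.+1) = ps_mul (ps_geom A) (ps_const (u 1%N)).
Proof.
move=> Hfree H1 H2 HR1 HR2 u A.
case: Hfree => Kdiv _ Hsp.
have [S [phi [hSc [hSX [hSY [hScl [hphic [hphi [hpX [hpY hSinv]]]]]]]]]] := Hsp (Cplx^o) divC 1 1.
pose r (k : nat) := R (Posz k).
have S1 : (1 : K) \in S by have := hSc 1; rewrite scale1r.
have S0 : (0 : K) \in S by have := hSc 0; rewrite scale0r.
have SD x y : x \in S -> y \in S -> x + y \in S by move=> hx hy; case: (hScl x y hx hy).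
have SM x y : x \in S -> y \in S -> x * y \in S by move=> hx hy; case: (hScl x y hx hy).
have pD x y : x \in S -> y \in S -> phi (x + y) = phi x + phi y by move=> hx hy; case: (hphi x y hx hy).
have pM x y : x \in S -> y \in S -> phi (x * y) = phi x * phi y by move=> hx hy; case: (hphi x y hx hy).
have p1 : phi 1 = 1 by have := hphic 1; rewrite !scale1r.
have p0 : phi 0 = 0.
  have := pD 0 0 S0 S0; rewrite addr0 => h.
  by apply: (@addrI _ (phi 0)); rewrite addr0 -h.
have nz x : x \in S -> phi x != 0 -> x \is a GRing.unit.
  move=> hx hpx; apply: Kdiv; apply: contra hpx => /eqP ->; by rewrite p0.
have pV x : x \in S -> phi x != 0 -> phi (x^-1) = (phi x)^-1.
  move=> hx hpx; have ux := nz x hx hpx.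
  have h : phi x * phi x^-1 = 1 by rewrite -pM ?hSinv // mulrV // p1.
  by rewrite (myinv (divC hpx) h).
pose G x := x \in S /\ (0 : CC) < phi x.
have G1 : G 1 by split => //; rewrite p1; exact: pos1.
have GD x y : G x -> G y -> G (x + y).
  by move=> [hx px] [hy py]; split; [apply: (SD) | rewrite pD //; apply: posD].
have GM x y : G x -> G y -> G (x * y).
  by move=> [hx px] [hy py]; split; [apply: (SM) | rewrite pM //; apply: posM].
have GV x : G x -> G (x^-1).
  move=> [hx px]; have hp := posne0 px.
  by split; [apply: (hSinv) | rewrite pV //; apply: posV].
have GX x n : G x -> G (x ^+ n).
  move=> gx; elim: n => [|n IH]; first by rewrite expr0.
  by rewrite exprS; apply: (GM).
have Gu x : G x -> x \is a GRing.unit by move=> [hx px]; apply: (nz) => //; apply: posne0.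
have GX0 : G X by split => //; rewrite hpX; exact: pos1.
have GY0 : G Y by split => //; rewrite hpY; exact: pos1.
have uX := Gu _ GX0. have uY := Gu _ GY0.
have GC : G (commC X Y) by rewrite /commC; apply: (GM); [apply: (GM); [apply: (GM)|]|]; auto.
have uC := Gu _ GC.
set C := commC X Y in GC uC H1 H2 *.
have H1' n : r (2*n+2)%N * C * r (2*n)%N = 1 + r (2*n+1)%N.
  have := H1 (n.+1)%:Z.
  by rewrite idx1 idx2 idx3.
have H1'' n : r (2*n+4)%N * C * r (2*n+2)%N = 1 + r (2*n+3)%N.
  have := H1' n.+1.
  by rewrite idx5 idx6 idx7.
have H2' n : r (2*n+3)%N * C * r (2*n+1)%N = 1 + r (2*n+2)%N ^+ 4.
  have := H2 (n.+1)%:Z.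
  by rewrite idx1 idx4 idx3.
have r1 : r 1%N = Y * X * Y^-1 by exact: HR1.
have r2 : r 2%N = Y by exact: HR2.
have Pos n : G (r (2*n+1)%N) /\ G (r (2*n+2)%N).
  elim: n => [|n [g1 g2]].
    by change (G (r 1%N) /\ G (r 2%N)); rewrite r1 r2; split => //; apply: (GM); [apply: (GM)|apply: (GV)].
  have e3 : r (2*n+3)%N = (1 + r (2*n+2)%N ^+ 4) * (r (2*n+1)%N)^-1 * C^-1.
    exact: (solveL uC (Gu _ g1) (H2' n)).
  have g3 : G (r (2*n+3)%N) by rewrite e3; apply: (GM); [apply: (GM); [apply: (GD) => //; apply: (GX)|apply: (GV)]|apply: (GV)].
  have e4 : r (2*n+4)%N = (1 + r (2*n+3)%N) * (r (2*n+2)%N)^-1 * C^-1.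
    exact: (solveL uC (Gu _ g2) (H1'' n)).
  have g4 : G (r (2*n+4)%N) by rewrite e4; apply: (GM); [apply: (GM); [apply: (GD)|apply: (GV)]|apply: (GV)].
  by rewrite idx6 idx5.
have Gr3 n : r (2*n+3)%N \is a GRing.unit.
  by have := (Pos n.+1).1; rewrite idx6 => /Gu.
have Gr4 n : r (2*n+4)%N \is a GRing.unit.
  by have := (Pos n.+1).2; rewrite idx5 => /Gu.
have E3 n x y : x \is a GRing.unit -> y \is a GRing.unit ->
    r (2*n+1)%N = y * x * y^-1 -> r (2*n+2)%N = y -> commC x y = C ->
    r (2*n+3)%N = (1 + y^+4) * x^-1.
  move=> ux uy h1 h2 hc; apply: (L1' ux uy).
  by rewrite hc -h1 -h2; exact: (H2' n).
have E4 n x y : x \is a GRing.unit -> y \is a GRing.unit ->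
    r (2*n+1)%N = y * x * y^-1 -> r (2*n+2)%N = y -> commC x y = C ->
    r (2*n+4)%N = (x + (1 + y^+4)) * y^-1 * x^-1.
  move=> ux uy h1 h2 hc; apply: (L2' ux uy).
  rewrite hc -(E3 n x y ux uy h1 h2 hc) -h2; exact: (H1'' n).
have Win n : exists x y : K, [/\ x \is a GRing.unit, y \is a GRing.unit,
    r (2*n+1)%N = y * x * y^-1, r (2*n+2)%N = y & commC x y = C /\ Pf x y = Pf X Y].
  elim: n => [|n [x [y [ux uy h1 h2 [hc hp]]]]].
    by exists X, Y; split => //.
  have e3 := E3 n x y ux uy h1 h2 hc.
  have e4 := E4 n x y ux uy h1 h2 hc.
  have uW : (1 + y^+4) \is a GRing.unit.
    have -> : 1 + y^+4 = r (2*n+3)%N * x by rewrite e3 divrK.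
    by apply: umul.
  have uZ : (x + (1 + y^+4)) \is a GRing.unit.
    have -> : x + (1 + y^+4) = r (2*n+4)%N * x * y by rewrite e4 !divrK.
    by apply: umul => //; apply: umul.
  exists (xp x y (1 + y^+4)), (yp x y (x + (1 + y^+4))).
  rewrite idx6 idx5; split.
  - exact: uxp.
  - exact: uyp.
  - by rewrite win_b.
  - by rewrite e4.
  - by split; [rewrite win_a | rewrite win_c].
have Lin n : r (2*n+4)%N = Pf X Y * r (2*n+2)%N - C * r (2*n)%N.
  have [x [y [ux uy h1 h2 [hc hp]]]] := Win n.
  rewrite (E4 n x y ux uy h1 h2 hc) -hp -hc.
  have h0 : commC x y * r (2*n)%N = y^-1 + x * y^-1.
    apply: (L0' uy); rewrite hc -h1 -h2; exact: (H1' n).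
  by rewrite h0 h2 Llin.
have hu n : u n = r (2*n)%N by rewrite /u /r idx8.
have LinU n : u n.+2 = Pf X Y * u n.+1 - C * u n.
  by rewrite !hu idx9 idx7 Lin.
have u2 : u 2%N = y1' X Y * u 1%N.
  have e := E4 0%N X Y uX uY r1 r2 (erefl _).
  rewrite !hu (_ : (2*2 = 2*0+4)%N) // e (_ : (2*1 = 2)%N) // r2.
  by rewrite (Ly1 X uY).
pose v n := u n.+1.
have hC : C = y3' X Y * y1' X Y - y2' X Y by rewrite -(Ly2 X uY) addrAC subrr add0r.
have hP : Pf X Y = y1' X Y + y3' X Y by rewrite (Ly13 Y uX).
have VB k : v k.+1 = y1' X Y * v k + Bsum (y2' X Y) (y3' X Y) v k.
  elim: k => [|k IH].
    by rewrite /v u2 /Bsum big_ord0 addr0.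
  rewrite BsumS.
  have IH' : Bsum (y2' X Y) (y3' X Y) v k = v k.+1 - y1' X Y * v k.
    by rewrite IH addrAC subrr add0r.
  rewrite IH' /v LinU hP hC.
  generalize (y1' X Y) (y2' X Y) (y3' X Y) (u k.+1) (u k.+2) => a b c p q.
  rewrite mulrDl mulrBl ?mulrBr ?mulrDr ?opprB ?mulrA ?addrA.
  by congr (_ + _); rewrite addrAC.
have hv n : v n = (if n == 0%N then u 1%N else 0) + \sum_(i < n.+1) A i * v (n - i)%N.
  case: n => [|k].
    rewrite big_ord1 /A AE /=. by rewrite addr0 mul0r addr0.
  rewrite /= add0r /A.
  under eq_bigr => i _ do rewrite AE.
  rewrite Tsum; exact: VB.
have A0 : A 0%N = 0 by rewrite /A AE /= addr0.
have hw n : ps_geom A n * u 1%N = (if n == 0%N then u 1%N else 0) +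
    \sum_(i < n.+1) A i * (ps_geom A (n - i)%N * u 1%N).
  rewrite (Grec A0) mulrDl mulr_suml; congr (_ + _).
    by case: (n == 0%N); rewrite ?mul1r ?mul0r.
  by apply: eq_bigr => i _; rewrite mulrA.
apply: functional_extensionality => n.
rewrite psmc.
exact: (uniq_rec A0 hv hw n).
Qed.
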